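(* Let $\mathcal M$ be a fully closed O*-vector space in $\mathcal L^\dagger(\mathcal D,\mathcal H)$ such that $\mathcal M'_{\rm w}\mathcal D\subset\mathcal D$, and let $E'$ be a projection in $\mathcal M'_{\rm w}$. Let $Z_{E'}$ be the projection onto $\overline{\langle\mathcal M'_{\rm w}E'\mathcal H\rangle}$ (central support of $E'$), and $\mathcal E=\langle\mathcal M'_{\rm w}E'\mathcal D\rangle\oplus(I-Z_{E'})\mathcal D\subset\mathcal D$. For $X\in(\mathcal M_{E'})''_{{\rm w}\sigma}$ define $X_e$ on $\mathcal E$ by $$X_e\Big(\sum_k C_kE'\xi_k+(I-Z_{E'})\eta\Big)=\sum_k C_kXE'\xi_k,\qquad C_k\in\mathcal M'_{\rm w},\ \xi_k,\eta\in\mathcal D,$$ and let $e(\mathcal M_{E'})=\{X_e:X\in(\mathcal M_{E'})''_{{\rm w}\sigma}\}$, an O*-vector space on $\mathcal E$. Assume that $\widehat{\mathcal D}(e(\mathcal M_{E'}))=\bigcap_{X\in(\mathcal M_{E'})''_{{\rm w}\sigma}}D(\overline{X_e})=\mathcal D$ (equivalently, the full closure of $\langle\mathcal M'_{\rm w}E'\mathcal D\rangle$ with respect to $e(\mathcal M_{E'})$ equals $Z_{E'}\mathcal D$). Then $(\mathcal M''_{{\rm w}\sigma})_{E'}=(\mathcal M_{E'})''_{{\rm w}\sigma}$.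
   Context: $\mathcal L^\dagger(\mathcal D,\mathcal H)$: linear operators $X$ with $D(X)=\mathcal D$ (dense subspace of Hilbert space $\mathcal H$), $D(X^* )\supseteq\mathcal D$, involution $X^\dagger=X^*\restriction_{\mathcal D}$. O*-vector space: $\dagger$-invariant subspace. $\widehat{\mathcal D}(\mathcal M)=\bigcap_{X\in\mathcal M}D(\overline X)$; $\mathcal M$ is fully closed if $\widehat{\mathcal D}(\mathcal M)=\mathcal D$. Weak commutant $\mathcal M'_{\rm w}=\{C\in\mathcal B(\mathcal H):\langle CX\xi,\eta\rangle=\langle C\xi,X^\dagger\eta\rangle\ \forall X\in\mathcal M,\ \xi,\eta\in\mathcal D\}$. Unbounded bicommutant $\mathcal M''_{{\rm w}\sigma}=\{X\in\mathcal L^\dagger(\mathcal D,\mathcal H):\langle CX\xi,\eta\rangle=\langle C\xi,X^\dagger\eta\rangle\ \forall C\in\mathcal M'_{\rm w},\ \xi,\eta\in\mathcal D\}$. Reduction by a projection $E'\in\mathcal M'_{\rm w}$ (with $\mathcal M'_{\rm w}\mathcal D\subset\mathcal D$): $\mathcal M_{E'}=\{X\restriction_{E'\mathcal D}:X\in\mathcal M\}$, an O*-vector space in $\mathcal L^\dagger(E'\mathcal D,E'\mathcal H)$, and similarly $(\mathcal M''_{{\rm w}\sigma})_{E'}=\{X\restriction_{E'\mathcal D}:X\in\mathcal M''_{{\rm w}\sigma}\}$; commutants of $\mathcal M_{E'}$ are taken in $E'\mathcal H$ with respect to the domain $E'\mathcal D$. $\langle\cdot\rangle$ denotes linear span. 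*)

(* Defs.v *)
From mathcomp Require Import all_boot all_order all_algebra complex all_reals.
Set Implicit Arguments. Unset Strict Implicit. Unset Printing Implicit Defensive.
Import Order.TTheory GRing.Theory Num.Theory.
Local Open Scope ring_scope.

Section Hilbert.
Variables (C : numClosedFieldType) (H : lmodType C) (ip : H -> H -> C).

Definition hconv (u : nat -> H) (x : H) : Prop :=
  forall eps : C, 0 < eps -> exists N : nat, forall n : nat, (N <= n)%N ->
    ip (u n - x) (u n - x) < eps.

Definition hcauchy (u : nat -> H) : Prop :=
  forall eps : C, 0 < eps -> exists N : nat, forall m n : nat, (N <= m)%N -> (N <= n)%N ->
    ip (u m - u n) (u m - u n) < eps.

Definition is_hilbert : Prop :=
  [/\ (forall (a : C) (x y z : H), ip (a *: x + y) z = a * ip x z + ip y z),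
      (forall x y : H, ip x y = (ip y x)^*),
      (forall x : H, 0 <= ip x x),
      (forall x : H, ip x x = 0 -> x = 0)
    & (forall u : nat -> H, hcauchy u -> exists x, hconv u x)].

Definition subspace (D : H -> Prop) : Prop :=
  D 0 /\ forall (a : C) (x y : H), D x -> D y -> D (a *: x + y).

Definition dense_in (K D : H -> Prop) : Prop :=
  forall x, K x -> exists u : nat -> H, (forall n, D (u n)) /\ hconv u x.

Definition linear_on (D : H -> Prop) (X : H -> H) : Prop :=
  forall (a : C) (x y : H), D x -> D y -> X (a *: x + y) = a *: X x + X y.

(* Y (restricted to Dm) is X^dagger = X^* restricted to Dm, the ambient Hilbert space being K *)
Definition is_dag (K Dm : H -> Prop) (X Y : H -> H) : Prop :=
  (forall eta, Dm eta -> K (Y eta)) /\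
  forall xi eta, Dm xi -> Dm eta -> ip (X xi) eta = ip xi (Y eta).

(* X in L^dagger(Dm, K) (operators are functions H -> H; only values on Dm matter) *)
Definition Ldag (K Dm : H -> Prop) (X : H -> H) : Prop :=
  [/\ linear_on Dm X, (forall x, Dm x -> K (X x)) & exists Y, is_dag K Dm X Y].

Definition bounded_on (K : H -> Prop) (T : H -> H) : Prop :=
  [/\ linear_on K T, (forall x, K x -> K (T x)) &
      exists b : C, forall x, K x -> ip (T x) (T x) <= b * ip x x].

Definition agree_on (Dm : H -> Prop) (X Y : H -> H) : Prop :=
  forall x, Dm x -> X x = Y x.

(* O*-vector space in L^dagger(D, H) (elements identified up to agreement on D) *)
Definition Ovs (D : H -> Prop) (M : (H -> H) -> Prop) : Prop :=
  [/\ (forall X, M X -> Ldag (fun _ => True) D X),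
      (exists Z, M Z /\ agree_on D Z (fun _ => 0)),
      (forall (a : C) X Y, M X -> M Y -> exists Z, M Z /\ agree_on D Z (fun x => a *: X x + Y x))
    & (forall X, M X -> exists Y, M Y /\ is_dag (fun _ => True) D X Y)].

(* weak commutant M'_w, computed in the ambient Hilbert space K w.r.t. domain Dm *)
Definition wcomm (K Dm : H -> Prop) (M : (H -> H) -> Prop) (T : H -> H) : Prop :=
  bounded_on K T /\
  forall X Y, M X -> is_dag K Dm X Y ->
    forall xi eta, Dm xi -> Dm eta -> ip (T (X xi)) eta = ip (T xi) (Y eta).

Definition bicomm (K Dm : H -> Prop) (M : (H -> H) -> Prop) (X : H -> H) : Prop :=
  Ldag K Dm X /\
  forall T, wcomm K Dm M T -> forall Y, is_dag K Dm X Y ->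
    forall xi eta, Dm xi -> Dm eta -> ip (T (X xi)) eta = ip (T xi) (Y eta).

Definition closdom_rel (G : H -> H -> Prop) (xi : H) : Prop :=
  exists u v : nat -> H, (forall n, G (u n) (v n)) /\ hconv u xi /\ exists z, hconv v z.

Definition closdom (D : H -> Prop) (X : H -> H) (xi : H) : Prop :=
  closdom_rel (fun x y => D x /\ y = X x) xi.

Definition fully_closed (D : H -> Prop) (M : (H -> H) -> Prop) : Prop :=
  forall xi, D xi <-> (forall X, M X -> closdom D X xi).

Definition projection (P : H -> H) : Prop :=
  [/\ bounded_on (fun _ => True) P, (forall x, P (P x) = P x)
    & (forall x y, ip (P x) y = ip x (P y))].

Definition img (P : H -> H) (S : H -> Prop) : H -> Prop :=
  fun x => exists y, S y /\ x = P y.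

End Hilbert.

(* Main.v *)
Require Import Defs.
From mathcomp Require Import all_boot all_order all_algebra complex all_reals.
From mathcomp Require Import ring lra.
From Stdlib Require Import ClassicalEpsilon Classical.
Import Order.TTheory GRing.Theory Num.Theory.
Set Implicit Arguments. Unset Strict Implicit.
Local Open Scope ring_scope.


Section C.
Variable R : realType.
Notation Re := (@complex.Re R).
Notation Im := (@complex.Im R).
Notation "x %:C" := (real_complex R x).

Definition nsq (z : R[i]) : R := Re z ^+ 2 + Im z ^+ 2.

Lemma mulconj (z : R[i]) : z * z^* = (nsq z)%:C.
Proof. case: z => a b; rewrite /nsq /=; simpc. apply/eqP; rewrite eq_complex /=; apply/andP; split; apply/eqP; ring. Qed.

Lemma nsq_ge0 z : 0 <= nsq z.
Proof. rewrite /nsq; nra. Qed.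

Lemma nsq_eq0 z : nsq z = 0 -> z = 0.
Proof. case: z => a b; rewrite /nsq /= => h. have ha : a = 0 by nra. have hb : b = 0 by nra. by rewrite ha hb. Qed.

Lemma nsqM a b : nsq (a * b) = nsq a * nsq b.
Proof. case: a => a1 a2; case: b => b1 b2; rewrite /nsq /=; ring. Qed.

Lemma nsqJ a : nsq (a^*) = nsq a.
Proof. case: a => a1 a2; rewrite /nsq /=; ring. Qed.

Lemma nsqD a b : nsq (a + b) <= 2 * nsq a + 2 * nsq b.
Proof. case: a => a1 a2; case: b => b1 b2; rewrite /nsq /=.
have h1 := sqr_ge0 (a1 - b1); have h2 := sqr_ge0 (a2 - b2). nra. Qed.

Lemma nsqR (r : R) : nsq (r%:C) = r ^+ 2.
Proof. rewrite /nsq /=; ring. Qed.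

Lemma ReJ z : Re (z^*) = Re z.
Proof. by case: z. Qed.

Lemma ReD a b : Re (a + b) = Re a + Re b.
Proof. by case: a; case: b. Qed.

Lemma ReN a : Re (- a) = - Re a.
Proof. by case: a. Qed.

Lemma ReRM (r : R) z : Re (r%:C * z) = r * Re z.
Proof. case: z => a b /=; ring. Qed.

Lemma RcM (r s : R) : (r * s)%:C = r%:C * s%:C.
Proof. by rewrite rmorphM. Qed.

Lemma Re_le z : Re z ^+ 2 <= nsq z.
Proof. rewrite /nsq; nra. Qed.

Lemma ge0_real (z : R[i]) : 0 <= z -> z = (Re z)%:C /\ 0 <= Re z.
Proof. case: z => a b; rewrite lecE => /andP[/eqP hb h]; move: hb h => /= -> h; by split. Qed.

Lemma lt0_real (z : R[i]) : 0 < z -> z = (Re z)%:C /\ 0 < Re z.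
Proof. case: z => a b; rewrite ltcE => /andP[/eqP hb h]; move: hb h => /= -> h; by split. Qed.

Lemma ltCR (r s : R) : (r%:C < s%:C) = (r < s).
Proof. by rewrite ltcE /= eqxx. Qed.
Lemma leCR (r s : R) : (r%:C <= s%:C) = (r <= s).
Proof. by rewrite lecE /= eqxx. Qed.
Lemma conjR (r : R) : (r%:C)^* = r%:C.
Proof. by apply/eqP; rewrite eq_complex /= oppr0 !eqxx. Qed.
Lemma conjJR (z : R[i]) (r : R) : (z^* * r%:C)^* = z * r%:C.
Proof. case: z => a b; apply/eqP; rewrite eq_complex /=; apply/andP; split; apply/eqP; ring. Qed.
End C.


Section B.
Variables (R : realType) (H : lmodType R[i]) (ip : H -> H -> R[i]).
Hypothesis hH : is_hilbert ip.
Notation Re := (@complex.Re R).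
Notation Im := (@complex.Im R).
Notation "x %:C" := (real_complex R x).

Lemma ipDl (a : R[i]) x y z : ip (a *: x + y) z = a * ip x z + ip y z.
Proof. by case: hH => h1 h2 h3 h4 h5; apply: h1. Qed.
Lemma ipC x y : ip x y = (ip y x)^*.
Proof. by case: hH => h1 h2 h3 h4 h5; apply: h2. Qed.
Lemma ip_ge0 x : 0 <= ip x x.
Proof. by case: hH => h1 h2 h3 h4 h5; apply: h3. Qed.
Lemma ip_eq0 x : ip x x = 0 -> x = 0.
Proof. by case: hH => h1 h2 h3 h4 h5; apply: h4. Qed.

Lemma ip0l z : ip 0 z = 0.
Proof. have := ipDl (-1) z z z. by rewrite scaleN1r addNr mulN1r addNr. Qed.
Lemma ipD x y z : ip (x + y) z = ip x z + ip y z.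
Proof. by rewrite -[x]scale1r ipDl mul1r scale1r. Qed.
Lemma ipZ a x z : ip (a *: x) z = a * ip x z.
Proof. by rewrite -[a *: x]addr0 ipDl ip0l addr0. Qed.
Lemma ipN x z : ip (- x) z = - ip x z.
Proof. by rewrite -scaleN1r ipZ mulN1r. Qed.
Lemma ipB x y z : ip (x - y) z = ip x z - ip y z.
Proof. by rewrite ipD ipN. Qed.
Lemma ip0r z : ip z 0 = 0.
Proof. by rewrite ipC ip0l conjC0. Qed.
Lemma ipDr x y z : ip z (x + y) = ip z x + ip z y.
Proof. by rewrite !(ipC z) ipD rmorphD. Qed.
Lemma ipZr a x z : ip z (a *: x) = a^* * ip z x.
Proof. by rewrite !(ipC z) ipZ rmorphM. Qed.
Lemma ipNr x z : ip z (- x) = - ip z x.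
Proof. by rewrite !(ipC z) ipN rmorphN. Qed.
Lemma ipBr x y z : ip z (x - y) = ip z x - ip z y.
Proof. by rewrite ipDr ipNr. Qed.

Lemma ip_suml n (f : 'I_n -> H) z : ip (\sum_(j < n) f j) z = \sum_(j < n) ip (f j) z.
Proof. elim/big_ind2: _ => //; [exact: ip0l | by move=> ? ? ? ? <- <-; rewrite ipD]. Qed.
Lemma ip_sumr n (f : 'I_n -> H) z : ip z (\sum_(j < n) f j) = \sum_(j < n) ip z (f j).
Proof. elim/big_ind2: _ => //; [exact: ip0r | by move=> ? ? ? ? <- <-; rewrite ipDr]. Qed.

Definition n2 x := Re (ip x x).

Lemma ipxx x : ip x x = (n2 x)%:C.
Proof. by have [] := ge0_real (ip_ge0 x). Qed.
Lemma n2_ge0 x : 0 <= n2 x.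
Proof. by have [] := ge0_real (ip_ge0 x). Qed.
Lemma n2_eq0 x : n2 x = 0 -> x = 0.
Proof. by move=> h; apply: ip_eq0; rewrite ipxx h. Qed.
Lemma n2_0 : n2 0 = 0.
Proof. by rewrite /n2 ip0l. Qed.

Lemma n2_exp x y a :
  n2 (x - a *: y) = n2 x - 2 * Re (a^* * ip x y) + nsq a * n2 y.
Proof.
rewrite /n2 ipB !ipBr !ipZ !ipZr [ip y x]ipC.
move: (ip x x) (ip x y) (ip y y) => [p1 p2] [q1 q2] [r1 r2].
case: a => a1 a2; rewrite /nsq /=; ring.
Qed.

Lemma n2Z a x : n2 (a *: x) = nsq a * n2 x.
Proof. rewrite /n2 ipZ ipZr; move: (ip x x) => [p1 p2]; case: a => a1 a2; rewrite /nsq /=; ring. Qed.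
Lemma n2N x : n2 (- x) = n2 x.
Proof. rewrite -scaleN1r n2Z; have -> : nsq (-1 : R[i]) = 1 by rewrite /nsq /=; ring.
by rewrite mul1r. Qed.
Lemma n2_sym x y : n2 (x - y) = n2 (y - x).
Proof. by rewrite -n2N opprB. Qed.

Lemma CS x y : nsq (ip x y) <= n2 x * n2 y.
Proof.
have [hy|hy] := eqVneq (n2 y) 0.
  rewrite (n2_eq0 hy) ip0r n2_0 mulr0.
  by have -> : nsq (0:R[i]) = 0 by rewrite /nsq /=; ring.
have hy0 : 0 < n2 y by rewrite lt_def hy n2_ge0.
set p := ip x y.
have := n2_ge0 (x - (p * (n2 y)^-1%:C) *: y).
rewrite n2_exp nsqM nsqR -/p.
have -> : Re ((p * (n2 y)^-1%:C)^* * p) = (n2 y)^-1 * nsq p.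
  by move: p => [p1 p2]; rewrite /nsq /=; ring.
set t := n2 y; set u := t^-1; set s := nsq p.
have hut : u * t = 1 by rewrite /u mulVf.
have hs : 0 <= s by apply: nsq_ge0.
have hu : 0 < u by rewrite /u invr_gt0.
move=> h.
have k : s * u ^+ 2 * t = u * s.
  have -> : s * u ^+ 2 * t = u * s * (u * t) by ring.
  by rewrite hut mulr1.
have k2 : s = u * s * t.
  have -> : u * s * t = s * (u * t) by ring.
  by rewrite hut mulr1.
rewrite k in h.
have h3 : 0 <= (n2 x - u * s) * t by apply: mulr_ge0; lra.
have : (n2 x - u * s) * t = n2 x * t - u * s * t by ring.
rewrite -k2 => e; rewrite e in h3; lra.
Qed.

Lemma n2_proj x y : 0 < n2 y ->
  n2 (x - (ip x y * (n2 y)^-1%:C) *: y) = n2 x - nsq (ip x y) / n2 y.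
Proof.
move=> hy0; rewrite n2_exp nsqM nsqR.
set p := ip x y.
have -> : Re ((p * (n2 y)^-1%:C)^* * p) = (n2 y)^-1 * nsq p.
  by move: p => [p1 p2]; rewrite /nsq /=; ring.
set t := n2 y; set s := nsq p.
have hut : t^-1 * t = 1 by rewrite mulVf // gt_eqF.
have -> : s * t^-1 ^+ 2 * t = s * t^-1 * (t^-1 * t) by ring.
rewrite hut; ring.
Qed.

Lemma n2_par a b : n2 (a + b) + n2 (a - b) = 2 * n2 a + 2 * n2 b.
Proof.
have e1 : a + b = a - (-1) *: b by rewrite scaleN1r opprK.
have e2 : a - b = a - 1 *: b by rewrite scale1r.
rewrite e1 e2 !n2_exp.
have -> : nsq (-1 : R[i]) = 1 by rewrite /nsq /=; ring.
have -> : nsq (1 : R[i]) = 1 by rewrite /nsq /=; ring.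
move: (ip a b) => [p1 p2] /=; ring.
Qed.

Lemma n2_ge0' x : x != 0 -> 0 < n2 x.
Proof. move=> hx; rewrite lt_def n2_ge0 andbT; apply/eqP => /n2_eq0 h; by rewrite h eqxx in hx. Qed.


Lemma n2_add a b : n2 (a + b) = n2 a + 2 * Re (ip a b) + n2 b.
Proof.
have e1 : a + b = a - (-1) *: b by rewrite scaleN1r opprK.
rewrite e1 n2_exp.
have -> : nsq (-1 : R[i]) = 1 by rewrite /nsq /=; ring.
move: (ip a b) => [p1 p2] /=; ring.
Qed.
End B.


Section Cv.
Variables (R : realType) (H : lmodType R[i]) (ip : H -> H -> R[i]).
Hypothesis hH : is_hilbert ip.
Notation Re := (@complex.Re R).
Notation Im := (@complex.Im R).
Notation "x %:C" := (real_complex R x).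
Notation n2 := (n2 ip).

Definition conv (u : nat -> H) x := forall e : R, 0 < e ->
  exists N, forall n, (N <= n)%N -> n2 (u n - x) < e.

Lemma hconvP u x : hconv ip u x <-> conv u x.
Proof.
split=> h e he.
  have he' : 0 < e%:C by rewrite ltcE /= eqxx.
  have [N hN] := h _ he'; exists N => n hn.
  by have := hN n hn; rewrite (ipxx hH) ltcE /= eqxx.
have [ee he2] := lt0_real he.
have [N hN] := h _ he2; exists N => n hn.
rewrite (ipxx hH) ee ltcE /= eqxx /=; by apply: hN.
Qed.

Lemma small0 (r : R) : 0 <= r -> (forall e, 0 < e -> r < e) -> r = 0.
Proof.
move=> h0 h; apply/eqP; rewrite eq_le h0 andbT leNgt; apply/negP => hr.
by have := h _ hr; rewrite ltxx.
Qed.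

Lemma Re_le2 p q (t : R) : 0 < t -> 2 * Re (ip p q) <= t * n2 p + t^-1 * n2 q.
Proof.
move=> ht.
have h1 := CS hH p q.
have h2 := Re_le (ip p q).
set r := Re (ip p q) in h2 *; set A := n2 p in h1 *; set B := n2 q in h1 *.
have hA : 0 <= A := n2_ge0 hH p.
have hB : 0 <= B := n2_ge0 hH q.
have hti : 0 < t^-1 by rewrite invr_gt0.
have htt : t * t^-1 = 1 by rewrite mulfV // gt_eqF.
have hAB : r ^+ 2 <= (t * A) * (t^-1 * B).
  have -> : t * A * (t^-1 * B) = A * B * (t * t^-1) by ring.
  rewrite htt mulr1; lra.
have hp : 0 <= t * A by apply: mulr_ge0; lra.
have hq : 0 <= t^-1 * B by apply: mulr_ge0; lra.
move: hAB hp hq; set P := t * A; set Q := t^-1 * B => hAB hp hq.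
have hsq := sqr_ge0 (P - Q).
have h4 : (2 * r) ^+ 2 <= (P + Q) ^+ 2.
  have -> : (P + Q) ^+ 2 = (P - Q) ^+ 2 + 4 * (P * Q) by ring.
  have -> : (2 * r) ^+ 2 = 4 * r ^+ 2 by ring.
  lra.
have [hr|hr] := lerP (2 * r) 0; first lra.
move: h4; rewrite ler_sqr // nnegrE; lra.
Qed.

Lemma n2D_le p q (t : R) : 0 < t -> n2 (p + q) <= (1 + t) * n2 p + (1 + t^-1) * n2 q.
Proof.
move=> ht.
have -> : p + q = p - (-1) *: q by rewrite scaleN1r opprK.
rewrite (n2_exp hH).
have -> : nsq (-1 : R[i]) = 1 by rewrite /nsq /=; ring.
have -> : Re ((-1)^* * ip p q) = - Re (ip p q).
  by move: (ip p q) => [a b] /=; ring.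
have := Re_le2 p q ht; lra.
Qed.

Lemma n2D p q : n2 (p + q) <= 2 * n2 p + 2 * n2 q.
Proof. have := n2D_le p q (ltr01 : (0:R) < 1); rewrite invr1; lra. Qed.

Lemma conv_const x : conv (fun _ => x) x.
Proof. by move=> e he; exists 0%N => n _; rewrite subrr (n2_0 hH). Qed.

Lemma conv_lin (a : R[i]) u v x y : conv u x -> conv v y ->
  conv (fun n => a *: u n + v n) (a *: x + y).
Proof.
move=> hu hv e he.
have hk : 0 < 4 * (nsq a + 1) by have := nsq_ge0 a; lra.
have he1 : 0 < e / (4 * (nsq a + 1)) by apply: divr_gt0.
have he2 : 0 < e / 4 by apply: divr_gt0; lra.
have [N1 h1] := hu _ he1; have [N2 h2] := hv _ he2.
exists (maxn N1 N2) => n hn.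
have hn1 : (N1 <= n)%N by apply: leq_trans hn; apply: leq_maxl.
have hn2 : (N2 <= n)%N by apply: leq_trans hn; apply: leq_maxr.
have -> : a *: u n + v n - (a *: x + y) = a *: (u n - x) + (v n - y).
  by rewrite scalerBr opprD addrACA.
apply: le_lt_trans (n2D _ _) _.
rewrite (n2Z hH).
have := h1 _ hn1; have := h2 _ hn2.
have := n2_ge0 hH (u n - x); have := nsq_ge0 a.
set A := nsq a; set U := n2 (u n - x); set V := n2 (v n - y) => hA hU h2' h1'.
have hq : U * (4 * (A + 1)) < e.
  by rewrite -ltr_pdivlMr.
nra.
Qed.

Lemma conv_lin_op (T : H -> H) (b : R) u x :
  linear_on (fun _ => True) T -> (forall z, n2 (T z) <= b * n2 z) ->
  conv u x -> conv (fun n => T (u n)) (T x).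
Proof.
move=> hl hb hu e he.
have hk : 0 < `|b| + 1 by have := normr_ge0 b; lra.
have he1 : 0 < e / (`|b| + 1) by apply: divr_gt0.
have [N hN] := hu _ he1; exists N => n hn.
have -> : T (u n) - T x = T (u n - x).
  have := hl (-1) x (u n) I I; rewrite scaleN1r addrC => ->.
  by rewrite -scaleN1r addrC.
apply: le_lt_trans (hb _) _.
have := hN n hn; rewrite ltr_pdivlMr // => h.
have := n2_ge0 hH (u n - x); have := ler_norm b.
set U := n2 (u n - x) => hbb hU.
have : b * U <= `|b| * U by apply: ler_wpM2r.
nra.
Qed.

Lemma lim_eq u v x z w y : conv u x -> conv v z ->
  (forall n, ip (v n) w = ip (u n) y) -> ip z w = ip x y.
Proof.
move=> hu hv h.
apply/eqP; rewrite -subr_eq0; apply/eqP; apply: nsq_eq0.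
apply: small0; first exact: nsq_ge0.
move=> e he.
have hk1 : 0 < 4 * (n2 w + 1) by have := n2_ge0 hH w; lra.
have hk2 : 0 < 4 * (n2 y + 1) by have := n2_ge0 hH y; lra.
have [N1 h1] := hv _ (divr_gt0 he hk1).
have [N2 h2] := hu _ (divr_gt0 he hk2).
pose n := maxn N1 N2.
have hn1 : (N1 <= n)%N by apply: leq_maxl.
have hn2 : (N2 <= n)%N by apply: leq_maxr.
have -> : ip z w - ip x y = ip (z - v n) w + ip (u n - x) y.
  by rewrite (ipB hH) (ipB hH) h; rewrite addrA addrNK.
apply: le_lt_trans (nsqD _ _) _.
have c1 := CS hH (z - v n) w; have c2 := CS hH (u n - x) y.
rewrite (n2_sym hH) in c1.
have := h1 _ hn1; have := h2 _ hn2; rewrite !ltr_pdivlMr //.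
have := n2_ge0 hH w; have := n2_ge0 hH y.
have := n2_ge0 hH (v n - z); have := n2_ge0 hH (u n - x).
move: c1 c2.
set A := nsq _; set B := nsq _; set V := n2 (v n - z); set U := n2 (u n - x).
set W := n2 w; set Y := n2 y.
nra.
Qed.

End Cv.

From mathcomp Require Import classical_sets.

Section Rz.
Variables (R : realType) (H : lmodType R[i]) (ip : H -> H -> R[i]).
Hypothesis hH : is_hilbert ip.
Notation Re := (@complex.Re R).
Notation Im := (@complex.Im R).
Notation "x %:C" := (real_complex R x).
Notation n2 := (n2 ip).
Notation conv := (conv ip).

Lemma small_inv (e : R) : 0 < e -> exists N, forall n, (N <= n)%N -> (n.+1%:R)^-1 < e.
Proof.
move=> he; exists (Num.truncn (e^-1)) => n hn.
have h1 := truncnS_gt (e^-1).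
have h2 : (Num.truncn e^-1).+1%:R <= n.+1%:R :> R by rewrite ler_nat.
rewrite -[e]invrK ltf_pV2 ?posrE ?invr_gt0 //; first by apply: lt_le_trans h2.
Qed.

Lemma complete u : (forall e : R, 0 < e -> exists N, forall m n, (N <= m)%N -> (N <= n)%N ->
   n2 (u m - u n) < e) -> exists x, conv u x.
Proof.
move=> hc.
have [x hx] : exists x, hconv ip u x.
  case: hH => _ _ _ _ h5; apply: h5 => eps heps.
  have [ee he2] := lt0_real heps.
  have [N hN] := hc _ he2; exists N => m n hm hn.
  by rewrite (ipxx hH) ee ltcE /= eqxx /=; apply: hN.
by exists x; apply/hconvP.
Qed.

Lemma riesz (f : H -> R[i]) (c : R) :
  (forall a x y, f (a *: x + y) = a * f x + f y) ->
  (forall x, nsq (f x) <= c * n2 x) -> exists z, forall x, f x = ip x z.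
Proof.
move=> fl fb.
have f0 : f 0 = 0.
  by have := fl (-1) 0 0; rewrite scaleN1r oppr0 addr0 mulN1r addNr.
have fB x y : f (x - y) = f x - f y.
  by rewrite addrC -scaleN1r fl mulN1r addrC.
have fZ a x : f (a *: x) = a * f x by rewrite -[a *: x]addr0 fl f0 addr0.
have [hz|[x1 hx1]] : (forall x, f x = 0) \/ exists x, f x <> 0.
  case: (classic (exists x, f x <> 0)) => [hh|hn]; first by right.
  by left => x; apply: NNPP => hx; apply: hn; exists x.
  by exists 0 => x; rewrite hz (ip0r hH).
pose x0 := (f x1)^-1 *: x1.
have fx0 : f x0 = 1 by rewrite fZ mulVf //; apply/eqP.
pose K k := f k = 0.
pose S : classical_sets.set R := fun r => exists k, K k /\ r = n2 (x0 - k).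
have hS : has_inf S.
  split; first by exists (n2 (x0 - 0)), 0.
  by exists 0 => r [k [_ ->]]; apply: n2_ge0.
pose m := inf S.
have m0 : 0 <= m.
  apply: lb_le_inf; first by exists (n2 (x0 - 0)), 0.
  by move=> r [k [_ ->]]; apply: n2_ge0.
have mlb k : K k -> m <= n2 (x0 - k).
  by move=> hk; apply: ge_inf; [case: hS | exists k].
have hk : forall n : nat, exists k, K k /\ n2 (x0 - k) < m + (n.+1%:R)^-1.
  move=> n; have hp : 0 < (n.+1%:R : R)^-1 by rewrite invr_gt0.
  have [r [k [Kk ->]] hr] := inf_adherent hp hS.
  by exists k.
pose k n := proj1_sig (constructive_indefinite_description _ (hk n)).
have kK n : K (k n) by rewrite /k; case: constructive_indefinite_description => ? [].
have kn n : n2 (x0 - k n) < m + (n.+1%:R)^-1.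
  by rewrite /k; case: constructive_indefinite_description => ? [].
have Kl a p q : K p -> K q -> K (a *: p + q).
  by rewrite /K fl => -> ->; rewrite mulr0 addr0.
have cauchy p q : n2 (k p - k q) <= 2 * (p.+1%:R)^-1 + 2 * (q.+1%:R)^-1.
  have par := n2_par hH (x0 - k q) (x0 - k p).
  have e1 : x0 - k q - (x0 - k p) = k p - k q.
    by rewrite opprB addrC addrA addrNK.
  have e2 : x0 - k q + (x0 - k p) = 2%:R *: (x0 - (2%:R^-1 : R[i]) *: (k q + k p)).
    rewrite scalerBr (scalerA 2%:R (2%:R^-1)) mulfV; last by rewrite pnatr_eq0.
    by rewrite scale1r scaler_nat mulr2n opprD addrACA.
  rewrite e1 e2 (n2Z hH) in par.
  have hm := mlb _ (Kl (2%:R^-1) _ _ (Kl 1 _ _ (kK q) (kK p)) (f0 : K 0)).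
  rewrite scale1r addr0 in hm.
  have e4 : nsq (2%:R : R[i]) = 4 by rewrite /nsq /=; ring.
  rewrite e4 in par.
  have := kn p; have := kn q; move: par hm.
  move=> h1 h2 h3 h4; move: (p.+1%:R^-1 : R) (q.+1%:R^-1 : R) h3 h4 => a b h3 h4; lra.
have [kl hkl] : exists kl, conv k kl.
  apply: complete => e he.
  have he4 : 0 < e / 4 by apply: divr_gt0 => //; lra.
  have [N hN] := small_inv he4.
  exists N => p q hp hq; apply: le_lt_trans (cauchy p q) _.
  have := hN p hp; have := hN q hq; move: (p.+1%:R^-1 : R) (q.+1%:R^-1 : R) => a b; lra.
have Kkl : K kl.
  apply: nsq_eq0; apply: small0; first exact: nsq_ge0.
  move=> e he.
  have hc : 0 < `|c| + 1 by have := normr_ge0 c; lra.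
  have [N hN] := hkl _ (divr_gt0 he hc).
  have := hN N (leqnn N); rewrite ltr_pdivlMr // => h1.
  have -> : f kl = f (kl - k N) by rewrite fB (kK N) subr0.
  apply: le_lt_trans (fb _) _.
  rewrite -(n2N hH) opprB.
  have := n2_ge0 hH (k N - kl); have := ler_norm c.
  move: (n2 (k N - kl)) h1 => U h1 hcc hU.
  have : c * U <= `|c| * U by apply: ler_wpM2r.
  nra.
pose w := x0 - kl.
have fw : f w = 1 by rewrite /w fB fx0 Kkl subr0.
have wm : n2 w <= m.
  rewrite leNgt; apply/negP => hlt.
  pose e := n2 w - m.
  have he : 0 < e by rewrite /e; lra.
  have eE : e = n2 w - m by [].
  clearbody e.
  pose t := e / 4 / (m + 1).
  have ht : 0 < t by apply: divr_gt0; [apply: divr_gt0 => //; lra | lra].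
  have tE : t = e / 4 / (m + 1) by [].
  have htm : t * m < e / 4.
    have htm1 : t * (m + 1) = e / 4.
      by rewrite tE divfK //; apply: lt0r_neq0; lra.
    clearbody t.
    lra.
  have hti : 0 < t^-1 by rewrite invr_gt0.
  have hq1 : 0 < e / (4 * (1 + t)) by apply: divr_gt0 => //; lra.
  have hq2 : 0 < e / (2 * (1 + t^-1)) by apply: divr_gt0 => //; lra.
  have [N1 hN1] := small_inv hq1.
  have [N2 hN2] := hkl _ hq2.
  pose n := maxn N1 N2.
  have h1 := hN1 n (leq_maxl _ _); have h2 := hN2 n (leq_maxr _ _).
  rewrite ltr_pdivlMr in h1; last lra.
  rewrite ltr_pdivlMr in h2; last lra.
  have hw : w = (x0 - k n) + (k n - kl) by rewrite /w addrA addrNK.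
  have hD := n2D_le hH (x0 - k n) (k n - kl) ht; rewrite -hw in hD.
  have hA := kn n; have hB := n2_ge0 hH (k n - kl).
  move: hD hA hB h1 h2.
  move: (n2 (x0 - k n)) (n2 (k n - kl)) (n.+1%:R^-1 : R) => A B a hD hA hB h1 h2.
  have hp1 : (1 + t) * A <= (1 + t) * (m + a) by apply: ler_wpM2l; lra.
  have hp2 : (1 + t^-1) * B < e / 2.
    move: h2; move: (t^-1) => ti h2; lra.
  suff : n2 w < n2 w by rewrite ltxx.
  lra.
have worth k' : K k' -> ip w k' = 0.
  move=> hk'.
  have [->|hk0] := eqVneq k' 0; first by rewrite (ip0r hH).
  have hn : 0 < n2 k' := n2_ge0' hH hk0.
  set a := ip w k' * (n2 k')^-1%:C.
  have := mlb _ (Kl a _ _ hk' Kkl).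
  have -> : x0 - (a *: k' + kl) = w - a *: k' by rewrite /w opprD addrA addrAC.
  rewrite n2_proj //.
  move=> h; apply: nsq_eq0; apply/eqP; rewrite eq_le nsq_ge0 andbT.
  have h3 : nsq (ip w k') / n2 k' <= 0 by lra.
  by move: h3; rewrite pmulr_lle0 // invr_gt0.
have w0 : w != 0 by apply/eqP => h; move: fw; rewrite h f0 => /eqP; rewrite eq_sym oner_eq0.
have hw := n2_ge0' hH w0.
clearbody w.
exists (((n2 w)^-1)%:C *: w) => x.
have hK : f (x - f x *: w) = 0 by rewrite fB fZ fw mulr1 subrr.
have := worth _ hK.
move=> /eqP; rewrite (ipBr hH) (ipZr hH) (ipxx hH) subr_eq0 => /eqP h.
have e : ip x w = f x * (n2 w)%:C by rewrite (ipC hH) h conjJR.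
rewrite (ipZr hH) conjR e mulrCA -rmorphM mulVf ?gt_eqF //.
by rewrite mulr1.
Qed.
End Rz.


Section Ad.
Variables (R : realType) (H : lmodType R[i]) (ip : H -> H -> R[i]).
Hypothesis hH : is_hilbert ip.
Notation Re := (@complex.Re R).
Notation Im := (@complex.Im R).
Notation "x %:C" := (real_complex R x).
Notation n2 := (n2 ip).
Notation conv := (conv ip).

Lemma ip_injr z1 z2 : (forall x, ip x z1 = ip x z2) -> z1 = z2.
Proof.
move=> h; apply/eqP; rewrite -subr_eq0; apply/eqP; apply: (ip_eq0 hH).
by rewrite (ipBr hH) h subrr.
Qed.
Lemma ip_injl z1 z2 : (forall x, ip z1 x = ip z2 x) -> z1 = z2.
Proof.
move=> h; apply/eqP; rewrite -subr_eq0; apply/eqP; apply: (ip_eq0 hH).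
by rewrite (ipB hH) h subrr.
Qed.

Lemma bnd_of K T : bounded_on ip K T -> exists b : R, 0 <= b /\ forall x, K x -> n2 (T x) <= b * n2 x.
Proof.
case=> _ _ [b hb]; exists `|Re b|; split; first exact: normr_ge0.
move=> x hx; have := hb x hx; rewrite !(ipxx hH) lecE => /andP[_].
have e : forall (bb : R[i]) (r : R), Re (bb * r%:C) = Re bb * r by move=> [? ?] r /=; ring.
rewrite e.
move=> h; apply: le_trans h _; apply: ler_wpM2r; first exact: n2_ge0.
exact: ler_norm.
Qed.

Lemma to_bnd K T (b : R) : linear_on K T -> (forall x, K x -> K (T x)) -> 0 <= b ->
  (forall x, K x -> n2 (T x) <= b * n2 x) -> bounded_on ip K T.
Proof.
move=> hl hK hb0 hb; split => //; exists b%:C => x hx.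
rewrite !(ipxx hH) -rmorphM lecE /= eqxx /=; exact: hb.
Qed.

Lemma adjoint_ex T (b : R) : linear_on (fun _ => True) T -> 0 <= b ->
  (forall x, n2 (T x) <= b * n2 x) ->
  exists T', [/\ forall x y, ip (T x) y = ip x (T' y),
     linear_on (fun _ => True) T' & forall y, n2 (T' y) <= b * n2 y].
Proof.
move=> hl hb0 hb.
have hz : forall y, exists z, forall x, ip (T x) y = ip x z.
  move=> y; apply: (riesz hH (c := b * n2 y)).
    by move=> a x x'; rewrite hl // (ipDl hH).
  move=> x; apply: le_trans (CS hH _ _) _.
  have := hb x; have := n2_ge0 hH y; have := n2_ge0 hH x.
  move: (n2 (T x)) (n2 x) (n2 y) => A B C hB hC hA.
  have : A * C <= b * B * C by apply: ler_wpM2r.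
  lra.
pose T' y := proj1_sig (constructive_indefinite_description _ (hz y)).
have hT' x y : ip (T x) y = ip x (T' y).
  by rewrite /T'; case: constructive_indefinite_description => z /=; apply.
exists T'; split => //.
  move=> a y y' _ _; apply: ip_injr => x.
  by rewrite -hT' (ipDr hH) (ipZr hH) !hT' -(ipZr hH) -(ipDr hH).
move=> y.
have h1 := CS hH (T (T' y)) y; rewrite hT' (ipxx hH) nsqR in h1.
have h2 := hb (T' y).
have := n2_ge0 hH (T' y); have := n2_ge0 hH y; have := n2_ge0 hH (T (T' y)).
move: h1 h2; move: (n2 (T' y)) (n2 y) (n2 (T (T' y))) => s N A h1 h2 hA hN hs.
have h3 : A * N <= b * s * N by apply: ler_wpM2r.
have h4 : s ^+ 2 <= b * s * N by lra.
have hbN : 0 <= b * N by apply: mulr_ge0.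
nra.
Qed.

End Ad.


Section M.
Variables (R : realType) (H : lmodType R[i]) (ip : H -> H -> R[i])
  (D : H -> Prop) (M : (H -> H) -> Prop) (E' : H -> H).
Hypothesis hH : is_hilbert ip.
Hypothesis hD : subspace D.
Hypothesis hdense : dense_in ip (fun _ => True) D.
Hypothesis hOvs : Ovs ip D M.
Hypothesis hinv : forall T xi, wcomm ip (fun _ => True) D M T -> D xi -> D (T xi).
Hypothesis hE : projection ip E'.
Hypothesis hEw : wcomm ip (fun _ => True) D M E'.
Variable Z : H -> H.
Hypothesis hZ : projection ip Z.
Hypothesis hZc : forall x, (exists y, x = Z y) <->
     exists u : nat -> H,
       (forall k, exists (n : nat) (Cs : 'I_n -> H -> H) (xs : 'I_n -> H),
          (forall j, wcomm ip (fun _ => True) D M (Cs j)) /\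
          u k = \sum_(j < n) Cs j (E' (xs j)))
       /\ hconv ip u x.
Hypothesis hfull : forall xi, D xi <->
     (forall X, bicomm ip (img E' (fun _ => True)) (img E' D) M X ->
        closdom_rel ip
          (fun x y => exists (n : nat) (Cs : 'I_n -> H -> H) (xs : 'I_n -> H) (eta : H),
             [/\ (forall j, wcomm ip (fun _ => True) D M (Cs j)),
                 (forall j, D (xs j)), D eta,
                 x = \sum_(j < n) Cs j (E' (xs j)) + (eta - Z eta)
               & y = \sum_(j < n) Cs j (X (E' (xs j)))])
          xi).

Notation Re := (@complex.Re R).
Notation "x %:C" := (real_complex R x).
Notation n2 := (n2 ip).
Notation conv := (conv ip).
Notation B := (wcomm ip (fun _ => True) D M).
Notation EH := (img E' (fun _ => True)).
Notation ED := (img E' D).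
Notation TT := (fun _ : H => True).
Notation BE := (wcomm ip EH ED M).

Lemma D0 : D 0. Proof. by case: hD. Qed.
Lemma Dlin a x y : D x -> D y -> D (a *: x + y). Proof. by case: hD => _; apply. Qed.
Lemma DD x y : D x -> D y -> D (x + y). Proof. by move=> *; rewrite -[x]scale1r; apply: Dlin. Qed.
Lemma DZ a x : D x -> D (a *: x). Proof. by move=> h; rewrite -[_ *: _]addr0; apply: Dlin => //; apply: D0. Qed.
Lemma DN x : D x -> D (- x). Proof. by move=> h; rewrite -scaleN1r; apply: DZ. Qed.
Lemma DB x y : D x -> D y -> D (x - y). Proof. by move=> *; apply: DD => //; apply: DN. Qed.

Lemma lin0 (K : H -> Prop) (T : H -> H) : K 0 -> linear_on (C:=R[i]) K T -> T 0 = 0.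
Proof.
move=> h0 hl; have := hl (-1) 0 0 h0 h0.
by rewrite scaleN1r oppr0 addr0 scaleN1r addNr.
Qed.

Lemma orthD w : (forall d, D d -> ip w d = 0) -> w = 0.
Proof.
move=> h; case: (@hdense w I) => u [hu hc]; move/(hconvP hH): hc => hc.
apply: (ip_eq0 hH).
have hh : forall n, ip (u n) w = ip (u n) 0.
  by move=> n; rewrite (ip0r hH) (ipC hH) h // conjC0.
have := lim_eq hH hc hc hh.
by rewrite (ip0r hH).
Qed.

Lemma orthD' w : (forall d, D d -> ip d w = 0) -> w = 0.
Proof. by move=> h; apply: orthD => d hd; rewrite (ipC hH) h // conjC0. Qed.

Lemma eqD w1 w2 : (forall d, D d -> ip w1 d = ip w2 d) -> w1 = w2.
Proof.
move=> h; apply/eqP; rewrite -subr_eq0; apply/eqP; apply: orthD => d hd.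
by rewrite (ipB hH) h // subrr.
Qed.
Lemma eqD' w1 w2 : (forall d, D d -> ip d w1 = ip d w2) -> w1 = w2.
Proof.
move=> h; apply/eqP; rewrite -subr_eq0; apply/eqP; apply: orthD' => d hd.
by rewrite (ipBr hH) h // subrr.
Qed.

Section Proj.
Variable P : H -> H.
Hypothesis hP : projection ip P.
Lemma Plin : linear_on (C:=R[i]) TT P. Proof. by case: hP => [[]]. Qed.
Lemma PP x : P (P x) = P x. Proof. by case: hP. Qed.
Lemma Psym x y : ip (P x) y = ip x (P y). Proof. by case: hP. Qed.
Lemma PL a x y : P (a *: x + y) = a *: P x + P y.
Proof. by apply: Plin. Qed.
Lemma PD x y : P (x + y) = P x + P y.
Proof. by have := PL 1 x y; rewrite !scale1r. Qed.
Lemma P0 : P 0 = 0. Proof. exact: lin0 Plin. Qed.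
Lemma PZ a x : P (a *: x) = a *: P x.
Proof. by rewrite -[a *: x]addr0 PL P0 addr0. Qed.
Lemma PN x : P (- x) = - P x. Proof. by rewrite -scaleN1r PZ scaleN1r. Qed.
Lemma PB x y : P (x - y) = P x - P y. Proof. by rewrite PD PN. Qed.
Lemma Pimg x : (exists y, True /\ x = P y) <-> P x = x.
Proof. split; [by case=> y [_ ->]; rewrite PP | by move=> h; exists x]. Qed.
Lemma Pimg' x : (exists y, x = P y) <-> P x = x.
Proof. split; [by case=> y ->; rewrite PP | by move=> h; exists x]. Qed.
Lemma Pmove x y : P y = y -> ip x y = ip (P x) y.
Proof. by move=> h; rewrite Psym h. Qed.
Lemma Pmove' x y : P x = x -> ip x y = ip x (P y).
Proof. by move=> h; rewrite -Psym h. Qed.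
Lemma Pcompl x y : P x = x -> P y = 0 -> ip x y = 0.
Proof. by move=> hx hy; rewrite -hx Psym hy (ip0r hH). Qed.
Lemma n2P x : n2 (P x) <= n2 x.
Proof.
have e : x = P x + (x - P x) by rewrite addrC subrK.
have h0 : ip (P x) (x - P x) = 0 by rewrite (ipBr hH) -Psym PP subrr.
have := n2_add hH (P x) (x - P x); rewrite -e h0 /= => ->.
have := n2_ge0 hH (x - P x); lra.
Qed.
Lemma Pbnd : bounded_on ip TT P. Proof. by case: hP. Qed.
End Proj.

Lemma orthE d : E' d = d -> (forall c, ED c -> ip c d = 0) -> d = 0.
Proof.
move=> hd h; apply: orthD' => x hx.
by rewrite (Pmove hE x hd) h //; exists x.
Qed.

Lemma eqE w1 w2 : E' w1 = w1 -> E' w2 = w2 -> (forall c, ED c -> ip c w1 = ip c w2) -> w1 = w2.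
Proof.
move=> h1 h2 h; apply/eqP; rewrite -subr_eq0; apply/eqP; apply: orthE.
  by rewrite (PB hE) h1 h2.
by move=> c hc; rewrite (ipBr hH) h // subrr.
Qed.

Lemma ED_D x : ED x -> D x.
Proof. by case=> y [hy ->]; apply: hinv. Qed.
Lemma ED_E x : ED x -> E' x = x.
Proof. by case=> y [hy ->]; rewrite (PP hE). Qed.
Lemma EH_E x : EH x -> E' x = x.
Proof. by move/(Pimg hE). Qed.
Lemma E_EH x : E' x = x -> EH x.
Proof. by move/(Pimg hE). Qed.
Lemma EH_img x : EH (E' x).
Proof. by exists x. Qed.
Lemma ED_lin a x y : ED x -> ED y -> ED (a *: x + y).
Proof.
case=> p [hp ->] [q [hq ->]]; exists (a *: p + q); split; first exact: Dlin.
by rewrite (PL hE).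
Qed.
Lemma ED_of d : D d -> ED (E' d). Proof. by move=> h; exists d. Qed.

Lemma dag_sym K Dm X Y : (forall x, Dm x -> K (X x)) -> is_dag ip K Dm X Y -> is_dag ip K Dm Y X.
Proof.
move=> hK [h1 h2]; split => // xi eta hxi heta.
by rewrite (ipC hH) -h2 // -(ipC hH).
Qed.

Lemma Mdag X : M X -> exists Y, M Y /\ is_dag ip TT D X Y.
Proof. by case: hOvs => _ _ _; apply. Qed.

Lemma Mlin X : M X -> linear_on (C:=R[i]) D X.
Proof. by case: hOvs => h _ _ _ hX; case: (h _ hX). Qed.

Lemma Bcomm T Q : B T -> M Q -> forall xi, D xi -> T (Q xi) = Q (T xi).
Proof.
move=> hT hQ xi hxi; have [Y [hY hdag]] := Mdag hQ.
apply: eqD => eta heta.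
have [_ h] := hT; rewrite (h _ _ hQ hdag) //.
by case: hdag => _ h2; rewrite h2 //; apply: hinv.
Qed.

Lemma bicomm_comm T X : B T -> bicomm ip TT D M X -> forall xi, D xi -> T (X xi) = X (T xi).
Proof.
move=> hT [[hl hr [Y hdag]] h] xi hxi.
apply: eqD => eta heta.
rewrite (h _ hT _ hdag) //.
by case: hdag => _ h2; rewrite h2 //; apply: hinv.
Qed.

Lemma E_M Q x : M Q -> ED x -> E' (Q x) = Q x.
Proof.
move=> hQ hx; rewrite (Bcomm hEw hQ (ED_D hx)).
by rewrite (ED_E hx).
Qed.

Lemma dagE Q Q' Yd : M Q -> M Q' -> is_dag ip TT D Q Q' -> is_dag ip EH ED Q Yd ->
  forall b, ED b -> Yd b = Q' b.
Proof.
move=> hQ hQ' hd1 [hd2 hd3] b hb.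
apply: eqE; first by apply: EH_E; apply: hd2.
  exact: E_M.
move=> c hc; rewrite -hd3 //.
by case: hd1 => _ ->; rewrite //; apply: ED_D.
Qed.

Lemma dag_uniq Q Y1 Y2 : is_dag ip TT D Q Y1 -> is_dag ip TT D Q Y2 ->
  forall eta, D eta -> Y1 eta = Y2 eta.
Proof.
move=> [_ h1] [_ h2] eta he; apply: eqD' => d hd.
by rewrite -h1 // -h2.
Qed.

Lemma Edag Q Q' : M Q -> is_dag ip TT D Q Q' -> is_dag ip EH ED Q (fun b => E' (Q' b)).
Proof.
move=> hQ [_ h]; split; first by move=> *; apply: EH_img.
move=> a b ha hb; rewrite h ?ED_D //.
by rewrite -(Psym hE) (ED_E ha). all: try exact: ED_D.
Qed.

Lemma ext_B T : BE T -> B (fun x => T (E' x)).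
Proof.
move=> hT; have [[hTl hTm _] hTc] := hT.
have [b [hb0 hb]] := bnd_of hH hT.1.
split.
  apply: (to_bnd hH (b := b)) => //.
    move=> a x y _ _; rewrite (PL hE) hTl //; exact: EH_img.
  move=> x _; apply: le_trans (hb _ (EH_img _)) _.
  by apply: ler_wpM2l => //; apply: n2P.
move=> Q Qd hQ hQd xi eta hxi heta.
have [Q' [hQ' hQ'd]] := Mdag hQ.
have EQ : E' (Q xi) = Q (E' xi) by apply: (Bcomm hEw hQ).
rewrite EQ.
have hTm' : E' (T (Q (E' xi))) = T (Q (E' xi)).
  apply: (EH_E); apply: hTm; apply: (E_EH).
  apply: (E_M hQ); exact: ED_of.
rewrite (Pmove' hE _ hTm').
rewrite (hTc _ _ hQ (Edag hQ hQ'd)); try by apply: ED_of.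
have hTm2 : E' (T (E' xi)) = T (E' xi).
  by apply: (EH_E); apply: hTm; apply: EH_img.
rewrite [in RHS](Pmove' hE _ hTm2).
congr (ip _ _).
rewrite -(Bcomm hEw hQ') // (PP hE).
by rewrite (dag_uniq hQ'd hQd).
Qed.

Lemma part1 X : bicomm ip TT D M X -> bicomm ip EH ED M X.
Proof.
move=> hX; have [[hl hr [Xd hXd]] hXc] := hX.
have XE x : ED x -> E' (X x) = X x.
  case=> y [hy ->]; rewrite (bicomm_comm hEw hX); last exact: hinv.
  by rewrite (PP hE).
split.
  split.
  - by move=> a x y hx hy; apply: hl; apply: ED_D.
  - by move=> x hx; apply: (E_EH); apply: XE.
  exists (fun b => E' (Xd b)); split; first by move=> *; apply: EH_img.
  move=> a b ha hb; case: hXd => _ ->; try exact: ED_D.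
  by rewrite -(Psym hE) (ED_E ha).
move=> T hT Yd hYd a b ha hb.
have hS := ext_B hT.
have [[hTl hTm _] hTc] := hT.
have e1 : T (X a) = T (E' (X a)) by rewrite XE.
rewrite e1 (hXc _ hS _ hXd); try exact: ED_D.
rewrite (ED_E ha).
have hTa : E' (T a) = T a.
  apply: EH_E; apply: hTm; apply: E_EH; exact: (ED_E ha).
rewrite (Pmove' hE _ hTa) [in RHS](Pmove' hE _ hTa).
congr (ip _ _).
have hYb : E' (Yd b) = Yd b by apply: EH_E; apply: hYd.1.
rewrite hYb; apply: eqE; first by rewrite (PP hE).
  by [].
move=> c hc; rewrite -(hYd.2 _ _ hc hb).
case: hXd => _ ->; try exact: ED_D.
by rewrite -(Psym hE) (ED_E hc).
Qed.


Lemma linL (S : H -> H) a x y : linear_on (C:=R[i]) TT S -> S (a *: x + y) = a *: S x + S y.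
Proof. by move=> hl; apply: hl. Qed.
Lemma linD (S : H -> H) x y : linear_on (C:=R[i]) TT S -> S (x + y) = S x + S y.
Proof. by move=> hl; have := hl 1 x y I I; rewrite !scale1r. Qed.
Lemma linN (S : H -> H) x : linear_on (C:=R[i]) TT S -> S (- x) = - S x.
Proof.
move=> hl; have := hl (-1) x 0 I I; rewrite (lin0 _ hl) // !addr0 !scaleN1r //.
Qed.
Lemma linB (S : H -> H) x y : linear_on (C:=R[i]) TT S -> S (x - y) = S x - S y.
Proof. by move=> hl; rewrite linD // linN. Qed.

Lemma lin_sum (S : H -> H) : linear_on (C:=R[i]) TT S ->
  forall n (f : 'I_n -> H), S (\sum_(j < n) f j) = \sum_(j < n) S (f j).
Proof.
move=> hl n f; elim/big_ind2: _ => //; first exact: lin0 hl.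
by move=> ? ? ? ? e1 e2; subst; rewrite linD.
Qed.

Lemma Blin T : B T -> linear_on (C:=R[i]) TT T.
Proof. by case=> [[]]. Qed.

Lemma Bcomp S C : B S -> B C -> B (fun x => S (C x)).
Proof.
move=> hS hC.
have [b1 [hb1 h1]] := bnd_of hH hS.1.
have [b2 [hb2 h2]] := bnd_of hH hC.1.
split.
  apply: (to_bnd hH (b := b1 * b2)).
  - by move=> a x y _ _ /=; rewrite !linL //; apply: Blin.
  - by [].
  - exact: mulr_ge0.
  move=> x _; apply: le_trans (h1 _ I) _; rewrite -mulrA.
  by apply: ler_wpM2l => //; apply: h2.
move=> Q Qd hQ hQd xi eta hxi heta /=.
rewrite (Bcomm hC hQ) //.
by have [_ h] := hS; rewrite (h _ _ hQ hQd) //; apply: hinv.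
Qed.

Lemma Badj S : B S -> exists S', B S' /\ forall x y, ip (S x) y = ip x (S' y).
Proof.
move=> hS; have [b [hb0 hb]] := bnd_of hH hS.1.
have [S' [hS'1 hS'2 hS'3]] := adjoint_ex hH (Blin hS) hb0 (fun x => hb x I).
exists S'; split => //; split.
  by apply: (to_bnd hH (b := b)) => // x _; apply: hS'3.
move=> Q Qd hQ hQd xi eta hxi heta.
have [Q' [hQ' hQ'd]] := Mdag hQ.
have hs := dag_sym (fun x _ => I) hQ'd.
have [_ h] := hS.
rewrite (ipC hH) -hS'1 -(dag_uniq hQ'd hQd) // -(h _ _ hQ' hs) //.
by rewrite [in RHS](ipC hH) -hS'1 -(ipC hH).
Qed.

Lemma W_BE P : B P -> BE (fun x => E' (P (E' x))).
Proof.
move=> hP; have [bb [hb0 hbb]] := bnd_of hH hP.1.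
split.
  apply: (to_bnd hH (b := bb)).
  - move=> a x y _ _; rewrite (PL hE).
    by rewrite (linL _ _ _ (Blin hP)) (PL hE).
  - by move=> *; apply: EH_img.
  - by [].
  - move=> x _; apply: le_trans (n2P hE _) _; apply: le_trans (hbb _ I) _.
    by apply: ler_wpM2l => //; apply: n2P.
move=> Q Yd hQ hYd a b ha hb.
have [Q' [hQ' hQ'd]] := Mdag hQ.
rewrite (E_M hQ ha) (Psym hE) (ED_E hb) (ED_E ha).
have [_ h] := hP.
rewrite (h _ _ hQ hQ'd); try exact: ED_D.
by rewrite (Psym hE) (EH_E (hYd.1 _ hb)) (dagE hQ hQ' hQ'd hYd hb).
Qed.

Lemma BEadj T : BE T -> exists T', BE T' /\ forall p q, EH p -> EH q -> ip (T p) q = ip p (T' q).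
Proof.
move=> hT; have hS := ext_B hT.
have [S' [hS' hadj]] := Badj hS.
exists (fun x => E' (S' (E' x))); split; first exact: W_BE.
move=> p q hp hq.
have e1 : T p = T (E' p) by rewrite (EH_E hp).
rewrite e1 hadj (Pmove' hE _ (EH_E hp)) (EH_E hq).
by [].
Qed.

Definition isSum s := exists (n : nat) (Cs : 'I_n -> H -> H) (xs : 'I_n -> H),
  (forall j, B (Cs j)) /\ s = \sum_(j < n) Cs j (E' (xs j)).

Lemma Z1 s : isSum s -> Z s = s.
Proof.
move=> hs; apply/(Pimg' hZ); apply/hZc; exists (fun _ => s); split; first by move=> k.
by apply/(hconvP hH); apply: conv_const.
Qed.

Lemma sum_map S : B S -> forall s, isSum s -> isSum (S s).
Proof.
move=> hS s [n [Cs [xs [hC ->]]]]; exists n, (fun j x => S (Cs j x)), xs; split.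
  by move=> j; apply: Bcomp.
by rewrite lin_sum //; apply: Blin.
Qed.

Lemma Z2 S y : B S -> Z (S (Z y)) = S (Z y).
Proof.
move=> hS; have [u [hu hc]] := (hZc (Z y)).1 (ex_intro _ y erefl).
apply/(Pimg' hZ); apply/hZc; exists (fun k => S (u k)); split.
  by move=> k; apply: sum_map => //; apply: hu.
have [b [hb0 hb]] := bnd_of hH hS.1.
apply/(hconvP hH); apply: (conv_lin_op hH (b := b)); first exact: Blin.
  by move=> z; apply: hb.
by apply/(hconvP hH).
Qed.

Lemma Z3 S x : B S -> Z (S x) = S (Z x).
Proof.
move=> hS; have [S' [hS' hadj]] := Badj hS.
apply: (ip_injl hH) => y.
rewrite (Psym hZ) hadj -(Z2 _ hS') -(Psym hZ) -hadj.
by rewrite -(Z2 _ hS) -(Psym hZ) (PP hZ).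
Qed.

Definition G (X : H -> H) (x y : H) : Prop :=
  exists (n : nat) (Cs : 'I_n -> H -> H) (xs : 'I_n -> H) (eta : H),
    [/\ (forall j, B (Cs j)), (forall j, D (xs j)), D eta,
        x = \sum_(j < n) Cs j (E' (xs j)) + (eta - Z eta)
      & y = \sum_(j < n) Cs j (X (E' (xs j)))].

Lemma G_single X C x : B C -> D x -> G X (C (E' x)) (C (X (E' x))).
Proof.
move=> hC hx; exists 1%N, (fun _ => C), (fun _ => x), 0; split => //.
- exact: D0.
- by rewrite big_ord1 (P0 hZ) subrr addr0.
- by rewrite big_ord1.
Qed.

Lemma G_compl X eta : D eta -> G X (eta - Z eta) 0.
Proof.
move=> he; exists 0%N, (fun _ => id), (fun _ => 0), eta; split => //.
- by case.
- by case.
- by rewrite big_ord0 add0r.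
- by rewrite big_ord0.
Qed.

Lemma Gmap S X w y : B S -> G X w y -> G X (S w) (S y).
Proof.
move=> hS [n [Cs [xs [eta [hC hx he -> ->]]]]].
have hl := Blin hS.
exists n, (fun j x => S (Cs j x)), xs, (S eta); split => //.
- by move=> j; apply: Bcomp.
- exact: hinv.
- by rewrite (linD _ _ hl) (lin_sum hl) (linB _ _ hl) (Z3 _ hS).
- by rewrite (lin_sum hl).
Qed.

Lemma Pcompl' (P : H -> H) x y : projection ip P -> P x = 0 -> P y = y -> ip x y = 0.
Proof. by move=> hP hx hy; rewrite -hy -(Psym hP) hx (ip0l hH). Qed.

Lemma K1 Y1 Y2 C C' a b : bicomm ip EH ED M Y1 -> is_dag ip EH ED Y1 Y2 ->
  B C -> B C' -> ED a -> ED b ->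
  ip (C (Y1 a)) (C' b) = ip (C a) (C' (Y2 b)).
Proof.
move=> hY1 hdag hC hC' ha hb.
have [C'' [hC'' hadj]] := Badj hC'.
have conjadj z w : ip z (C' w) = ip (C'' z) w.
  by rewrite (ipC hH) hadj -(ipC hH).
have hP := Bcomp hC'' hC.
have hT := W_BE hP.
have hY1a : E' (Y1 a) = Y1 a by apply: EH_E; case: hY1 => [[_ hm _] _]; apply: hm.
rewrite !conjadj.
have e1 : ip (C'' (C (Y1 a))) b = ip (E' (C'' (C (E' (Y1 a))))) b.
  by rewrite (Psym hE) hY1a (ED_E hb).
have e2 : ip (E' (C'' (C (E' a)))) (Y2 b) = ip (C'' (C a)) (Y2 b).
  by rewrite (Psym hE) (ED_E ha) (EH_E (hdag.1 _ hb)).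
rewrite e1 -e2.
by case: hY1 => _ h; apply: (h _ hT _ hdag).
Qed.

Lemma AI Y1 Y2 u y w y' : bicomm ip EH ED M Y1 -> is_dag ip EH ED Y1 Y2 ->
  G Y1 u y -> G Y2 w y' -> ip y w = ip u y'.
Proof.
move=> hY1 hdag [n [Cs [xs [eta [hC hx he -> ->]]]]] [m [Cs' [xs' [eta' [hC' hx' he' -> ->]]]]].
have hY1m : forall k, E' (Y1 (E' (xs k))) = Y1 (E' (xs k)).
  by move=> k; apply: EH_E; case: hY1 => [[_ hm _] _]; apply: hm; apply: ED_of.
have hY2m : forall k, E' (Y2 (E' (xs' k))) = Y2 (E' (xs' k)).
  by move=> k; apply: EH_E; apply: hdag.1; apply: ED_of.
rewrite (ipDr hH) (ipD hH).
have z1 : ip (\sum_(k < n) Cs k (Y1 (E' (xs k)))) (eta' - Z eta') = 0.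
  apply: (Pcompl hZ); last by rewrite (PB hZ) (PP hZ) subrr.
  apply: Z1; exists n, Cs, (fun k => Y1 (E' (xs k))); split => //.
  by apply: eq_bigr => k _; rewrite hY1m.
have z2 : ip (eta - Z eta) (\sum_(j < m) Cs' j (Y2 (E' (xs' j)))) = 0.
  apply: (Pcompl' hZ); first by rewrite (PB hZ) (PP hZ) subrr.
  apply: Z1; exists m, Cs', (fun k => Y2 (E' (xs' k))); split => //.
  by apply: eq_bigr => k _; rewrite hY2m.
rewrite z1 z2 !addr0 (ip_suml hH) (ip_sumr hH).
under eq_bigr => k _ do rewrite (ip_sumr hH).
under [RHS]eq_bigr => j _ do rewrite (ip_suml hH).
rewrite exchange_big /=; apply: eq_bigr => j _; apply: eq_bigr => k _.
apply: (K1 hY1 hdag); [apply: hC|apply: hC'|apply: ED_of; apply: hx|apply: ED_of; apply: hx'].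
Qed.

Lemma lim0r u x w : conv u x -> (forall n, ip w (u n) = 0) -> ip w x = 0.
Proof.
move=> hc h.
have hh : forall n, ip (u n) w = ip (u n) 0.
  by move=> n; rewrite (ip0r hH) (ipC hH) h conjC0.
have := lim_eq hH hc hc hh; rewrite (ip0r hH) => e.
by rewrite (ipC hH) e conjC0.
Qed.

Lemma ET a : (forall C x, B C -> D x -> ip a (C (E' x)) = 0) ->
  (forall eta, D eta -> ip a (eta - Z eta) = 0) -> a = 0.
Proof.
move=> h1 h2.
have h1' C x : B C -> ip a (C (E' x)) = 0.
  move=> hC; case: (@hdense x I) => u [hu hc]; move/(hconvP hH): hc => hc.
  have hCE := Bcomp hC hEw.
  have [b [hb0 hb]] := bnd_of hH hCE.1.
  have hc2 := conv_lin_op hH (Blin hCE) (fun z => hb z I) hc.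
  by apply: lim0r hc2 _ => n; apply: h1.
have hs s : isSum s -> ip a s = 0.
  case=> n [Cs [xs [hC ->]]]; rewrite (ip_sumr hH) big1 // => j _; exact: h1'.
have hz : ip a (Z a) = 0.
  have [u [hu hc]] := (hZc (Z a)).1 (ex_intro _ a erefl).
  move/(hconvP hH): hc => hc; apply: lim0r hc _ => k; apply: hs.
  exact: hu.
have hza : a - Z a = 0.
  apply: orthD => d hd; rewrite (ipB hH) (Psym hZ) -(ipBr hH); exact: h2.
apply: (ip_eq0 hH).
have e : ip a a = ip a (Z a + (a - Z a)) by rewrite addrC subrK.
by rewrite e hza addr0 hz.
Qed.

Lemma dag_bicomm Y Yd : bicomm ip EH ED M Y -> is_dag ip EH ED Y Yd -> bicomm ip EH ED M Yd.
Proof.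
move=> hY hYd; have [[hYl hYm _] hYc] := hY.
have YdE x : ED x -> E' (Yd x) = Yd x by move=> hx; apply: EH_E; apply: hYd.1.
split.
  split.
  - move=> a x y hx hy; apply: eqE.
    + by apply: YdE; apply: ED_lin.
    + by rewrite (PL hE) !YdE.
    move=> c hc; rewrite -hYd.2 //; last exact: ED_lin.
    rewrite (ipDr hH) (ipZr hH) (ipDr hH) (ipZr hH).
    by rewrite !hYd.2.
  - exact: hYd.1.
  by exists Y; apply: dag_sym hYd.
move=> T hT Z0 hZ0 a b ha hb.
have e : Z0 b = Y b.
  apply: eqE; [by apply: EH_E; apply: hZ0.1 | by apply: EH_E; apply: hYm |].
  move=> c hc; rewrite -hZ0.2 // (ipC hH) -hYd.2 //.
  by rewrite -(ipC hH).
rewrite e.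
have [T' [hT' hadj]] := BEadj hT.
have hYda : EH (Yd a) by apply: hYd.1.
have hb' : EH b by apply: E_EH; apply: ED_E.
have ha' : EH a by apply: E_EH; apply: ED_E.
have hYb : EH (Y b) by apply: hYm.
rewrite hadj // (ipC hH) -(hYc _ hT' _ hYd) // -(ipC hH).
by rewrite -hadj.
Qed.

Lemma closG X xi : bicomm ip EH ED M X -> D xi ->
  exists u v z, [/\ forall n, G X (u n) (v n), conv u xi & conv v z].
Proof.
move=> hX hxi.
have [u [v [h1 [h2 [z h3]]]]] := (hfull xi).1 hxi X hX.
exists u, v, z; split => //; by apply/(hconvP hH).
Qed.

Definition Pr (Y2 : H -> H) xi z := forall w y', G Y2 w y' -> ip z w = ip xi y'.

Lemma Pr_uniq Y2 xi z1 z2 : Pr Y2 xi z1 -> Pr Y2 xi z2 -> z1 = z2.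
Proof.
move=> h1 h2; apply/eqP; rewrite -subr_eq0; apply/eqP; apply: ET.
  move=> C x hC hx; have hG := G_single Y2 hC hx.
  by rewrite (ipB hH) (h1 _ _ hG) (h2 _ _ hG) subrr.
move=> eta he; have hG := G_compl Y2 he.
by rewrite (ipB hH) (h1 _ _ hG) (h2 _ _ hG) subrr.
Qed.

Lemma Pr_lim Y1 Y2 u v xi z : bicomm ip EH ED M Y1 -> is_dag ip EH ED Y1 Y2 ->
  (forall n, G Y1 (u n) (v n)) -> conv u xi -> conv v z -> Pr Y2 xi z.
Proof.
move=> hY1 hdag hG hu hv w y' hw.
apply: (lim_eq hH hu hv) => n.
exact: AI hY1 hdag (hG n) hw.
Qed.

Lemma Pr_ex Y1 Y2 xi : bicomm ip EH ED M Y1 -> is_dag ip EH ED Y1 Y2 ->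
  exists z, D xi -> Pr Y2 xi z.
Proof.
move=> hY1 hdag.
case: (classic (D xi)) => hxi; last by exists 0.
have [u [v [z [hG hu hv]]]] := closG hY1 hxi.
by exists z => _; apply: Pr_lim hY1 hdag hG hu hv.
Qed.

Lemma part2 Y : bicomm ip EH ED M Y ->
  exists X, bicomm ip TT D M X /\ agree_on ED X Y.
Proof.
move=> hY; have [[hYl hYm [Yd hYd]] hYc] := hY.
have hYd' := dag_bicomm hY hYd.
have hsym : is_dag ip EH ED Yd Y := dag_sym hYm hYd.
pose X xi := proj1_sig (constructive_indefinite_description _ (Pr_ex xi hY hYd)).
have hX xi : D xi -> Pr Yd xi (X xi).
  by rewrite /X; case: constructive_indefinite_description.
pose X' xi := proj1_sig (constructive_indefinite_description _ (Pr_ex xi hYd' hsym)).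
have hX' xi : D xi -> Pr Y xi (X' xi).
  by rewrite /X'; case: constructive_indefinite_description.
clearbody X X'.
have Xlin : linear_on (C:=R[i]) D X.
  move=> a x y hx hy; apply: (Pr_uniq (hX _ (Dlin a hx hy))) => w y' hw.
  by rewrite (ipDl hH) (hX _ hx _ _ hw) (hX _ hy _ _ hw) (ipDl hH).
have Xagree : agree_on ED X Y.
  move=> c hc; apply: (Pr_uniq (hX _ (ED_D hc))) => w y' hw.
  have hG : G Y c (Y c).
    case: hc => c0 [hc0 ec].
    have := G_single Y hEw hc0; rewrite (PP hE) -ec (EH_E (hYm _ _)) //.
    by exists c0.
  exact: AI hY hYd hG hw.
have Xdag : is_dag ip TT D X X'.
  split => // xi eta hxi heta.
  have [u [v [z [hG hu hv]]]] := closG hYd' heta.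
  have hz : Pr Y eta z := Pr_lim hYd' hsym hG hu hv.
  rewrite -(Pr_uniq hz (hX' _ heta)).
  have h1 : forall n, ip (u n) (X xi) = ip (v n) xi.
    by move=> n; rewrite (ipC hH) (hX _ hxi _ _ (hG n)) -(ipC hH).
  have := lim_eq hH hv hu h1.
  by move=> e; rewrite (ipC hH) e -(ipC hH).
have Xcomm T xi : B T -> D xi -> T (X xi) = X (T xi).
  move=> hT hxi; have [T' [hT' hadj]] := Badj hT.
  apply: (Pr_uniq _ (hX _ (hinv hT hxi))) => w y' hw.
  by rewrite hadj (hX _ hxi _ _ (Gmap hT' hw)) -hadj.
exists X; split => //; split.
  by split => //; exists X'.
move=> T hT Yd0 hYd0 xi eta hxi heta.
rewrite Xcomm //; apply: hYd0.2 => //; exact: hinv.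
Qed.
End M.

Theorem lemma3p1 (R : realType) (H : lmodType R[i]) (ip : H -> H -> R[i])
  (D : H -> Prop) (M : (H -> H) -> Prop) (E' Z : H -> H) :
  is_hilbert ip ->
  subspace D -> dense_in ip (fun _ => True) D ->
  Ovs ip D M -> fully_closed ip D M ->
  (* M'_w D is contained in D *)
  (forall T xi, wcomm ip (fun _ => True) D M T -> D xi -> D (T xi)) ->
  (* E' is a projection in M'_w *)
  projection ip E' -> wcomm ip (fun _ => True) D M E' ->
  (* Z = Z_{E'} is the projection onto the closed linear span of M'_w E' H *)
  projection ip Z ->
  (forall x, (exists y, x = Z y) <->
     exists u : nat -> H,
       (forall k, exists (n : nat) (Cs : 'I_n -> H -> H) (xs : 'I_n -> H),
          (forall j, wcomm ip (fun _ => True) D M (Cs j)) /\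
          u k = \sum_(j < n) Cs j (E' (xs j)))
       /\ hconv ip u x) ->
  (* hypothesis: \hat D(e(M_{E'})) = D, where X_e has graph on
     E = <M'_w E' D> + (I - Z) D given by
     X_e (sum_j C_j E' xi_j + (I - Z) eta) = sum_j C_j X E' xi_j *)
  (forall xi, D xi <->
     (forall X, bicomm ip (img E' (fun _ => True)) (img E' D) M X ->
        closdom_rel ip
          (fun x y => exists (n : nat) (Cs : 'I_n -> H -> H) (xs : 'I_n -> H) (eta : H),
             [/\ (forall j, wcomm ip (fun _ => True) D M (Cs j)),
                 (forall j, D (xs j)), D eta,
                 x = \sum_(j < n) Cs j (E' (xs j)) + (eta - Z eta)
               & y = \sum_(j < n) Cs j (X (E' (xs j)))])
          xi)) ->
  (* conclusion: (M''_{w sigma})_{E'} = (M_{E'})''_{w sigma} as sets of operators on E'D *)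
  (forall X, bicomm ip (fun _ => True) D M X ->
     exists Y, bicomm ip (img E' (fun _ => True)) (img E' D) M Y
               /\ agree_on (img E' D) X Y) /\
  (forall Y, bicomm ip (img E' (fun _ => True)) (img E' D) M Y ->
     exists X, bicomm ip (fun _ => True) D M X /\ agree_on (img E' D) X Y).
Proof.
move=> hH hD hdense hOvs hfc hinv hE hEw hZ hZc hfull; split.
  move=> X hX; exists X; split; last by move=> x _.
  by eapply part1; eauto.
move=> Y hY.
by eapply part2; eauto.
Qed.
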